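(* Let $\{Y_{1\,t}\}_{t\in\mathbb N}$ and $\{Y_{2\,t}\}_{t\in\mathbb N}$ be two real-valued time series with $E(Y_{2\,t}^2)<\infty$ for all $t$, and let $\mathcal F^{(1)}_{t-1}=\sigma(Y_{1\,t-1},Y_{1\,t-2},\ldots)$, $\mathcal F^{(2)}_{t-1}=\sigma(Y_{2\,t-1},Y_{2\,t-2},\ldots)$, $\mathcal F^{(1,2)}_{t-1}=\sigma(\mathcal F^{(1)}_{t-1},\mathcal F^{(2)}_{t-1})$. Consider the three conditions (M) $\Pr\big(E(Y_{2\,t}\mid\mathcal F^{(2)}_{t-1})\neq E(Y_{2\,t}\mid\mathcal F^{(1,2)}_{t-1})\big)>0$ (causality in mean); (V) $\Pr\Big(E\big[(Y_{2\,t}-E(Y_{2\,t}\mid\mathcal F^{(1,2)}_{t-1}))^2\mid\mathcal F^{(2)}_{t-1}\big]\neq E\big[(Y_{2\,t}-E(Y_{2\,t}\mid\mathcal F^{(1,2)}_{t-1}))^2\mid\mathcal F^{(1,2)}_{t-1}\big]\Big)>0$ (causality in variance); (S) $\Pr\Big(E\big[(Y_{2\,t}-E(Y_{2\,t}\mid\mathcal F^{(2)}_{t-1}))^2\mid\mathcal F^{(2)}_{t-1}\big]\neq E\big[(Y_{2\,t}-E(Y_{2\,t}\mid\mathcal F^{(1,2)}_{t-1}))^2\mid\mathcal F^{(1,2)}_{t-1}\big]\Big)>0$. Then (S) holds if at least one of (M) and (V) holds.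
   Context: Condition (V) is the paper's explicit formulation of Granger causality in variance, $\Pr(\mathrm{Var}(Y_{2\,t}\mid\mathcal F^{(2)}_{t-1})\neq \mathrm{Var}(Y_{2\,t}\mid\mathcal F^{(1,2)}_{t-1}))>0$, written with the centering $E(Y_{2\,t}\mid\mathcal F^{(1,2)}_{t-1})$. Condition (S) expresses simultaneous Granger causality in mean and variance from $\{Y_{1\,t}\}$ to $\{Y_{2\,t}\}$. *)

(* Defs.v *)
From HB Require Import structures.
From mathcomp Require Import all_boot all_order all_algebra.
From mathcomp Require Import all_classical all_reals all_analysis.
Set Implicit Arguments. Unset Strict Implicit. Unset Printing Implicit Defensive.
Import Order.TTheory GRing.Theory Num.Theory.
Local Open Scope classical_set_scope.
Local Open Scope ring_scope.

(* Generators of the past sigma-algebra sigma(Y_{t-1}, Y_{t-2}, ...):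
   preimages of Borel sets under Y_s, s < t. *)
Definition past_gen {d} {T : measurableType d} {R : realType}
  (Y : nat -> T -> R) (t : nat) : set (set T) :=
  [set A | exists s : nat, (s < t)%N /\
     exists B : set R, measurable B /\ A = Y s @^-1` B].

Definition past_sigma {d} {T : measurableType d} {R : realType}
  (Y : nat -> T -> R) (t : nat) : set (set T) := <<s past_gen Y t >>.

Definition past_sigma2 {d} {T : measurableType d} {R : realType}
  (Y1 Y2 : nat -> T -> R) (t : nat) : set (set T) :=
  <<s past_sigma Y1 t `|` past_sigma Y2 t >>.

(* Z is a version of the conditional expectation E(X | G):
   Z is G-measurable, integrable, and has the same integral as X on
   every set of G. *)
Definition is_cond_exp {d} {T : measurableType d} {R : realType}
  (P : probability T R) (G : set (set T)) (X Z : T -> R) : Prop :=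
  (forall B : set R, measurable B -> G (Z @^-1` B)) /\
  P.-integrable setT (fun x => (Z x)%:E) /\
  (forall A, G A ->
     (\int[P]_(x in A) (Z x)%:E = \int[P]_(x in A) (X x)%:E)%E).

(* Main.v *)
Require Import Defs.
From HB Require Import structures.
From mathcomp Require Import all_boot all_order all_algebra.
From mathcomp Require Import all_classical all_reals all_analysis.
From mathcomp Require Import measurable_realfun ring lra.
Import Order.TTheory GRing.Theory Num.Theory.
Local Open Scope classical_set_scope.
Local Open Scope ring_scope.
Import HBNNSimple.
Section sub.
Local Open Scope ereal_scope.
Context {R : realType} {d : measure_display} {T : measurableType d}.
Variable (mu : {measure set T -> \bar R}).
Variable G : set (set T).
Hypothesis GM : G `<=` measurable.

Lemma sGM : <<s G >> `<=` measurable.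
Proof. exact: smallest_sub (@sigma_algebra_measurable _ T) GM. Qed.

Lemma gmeas d' (U : measurableType d') (Z : T -> U) :
  measurable_fun (setT : set (g_sigma_algebraType G)) (Z : g_sigma_algebraType G -> U) ->
  measurable_fun (setT : set T) Z.
Proof. move=> mZ _ B mB; exact: sGM (mZ measurableT B mB). Qed.

Lemma ind_ge0 (s : {nnsfun g_sigma_algebraType G >-> R}) y (x : T) :
  (0 <= y * \1_((s : T -> R) @^-1` [set y]) x)%R.
Proof.
rewrite indicE; case: (boolP (x \in _)) => [/set_mem <-|_]; rewrite ?mulr1 ?mulr0 //.
Qed.

Lemma simple_step (s : {nnsfun g_sigma_algebraType G >-> R}) (c : T -> R)
  (mc : measurable_fun setT c) (c0 : forall x, (0 <= c x)%R) :
  \int[mu]_x ((s x)%:E * (c x)%:E) =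
  \sum_(y \in range s) (y%:E * \int[mu]_(x in (s : T -> R) @^-1` [set y]) (c x)%:E).
Proof.
have mA y : measurable ((s : T -> R) @^-1` [set y]).
  exact: sGM (measurable_funPTI s (measurable_set1 y)).
transitivity (\int[mu]_x (\sum_(y \in range s) ((y * \1_((s : T -> R) @^-1` [set y]) x)%:E * (c x)%:E))).
  apply: eq_integral => x _; rewrite [in LHS]fimfunE -fsumEFin // ge0_mule_fsuml //.
  by move=> y; rewrite lee_fin; exact: ind_ge0.
rewrite ge0_integral_fsum //; last 2 first.
- move=> y; apply: emeasurable_funM; apply/measurable_EFinP => //.
  apply: measurable_funM => //; exact: measurable_indic.
- by move=> y x _; rewrite mule_ge0 ?lee_fin // ind_ge0.
apply: eq_fsbigr => y /set_mem [x0 _ <-].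
under eq_integral do rewrite EFinM -muleA.
rewrite ge0_integralZl_EFin //; last 2 first.
- by move=> x _; rewrite mule_ge0 ?lee_fin.
- apply: emeasurable_funM; apply/measurable_EFinP => //; exact: measurable_indic.
congr (_ * _); rewrite [RHS]integral_mkcond epatch_indic.
by apply: eq_integral => x _; rewrite muleC.
Qed.

Lemma key (a b : T -> R) (ma : measurable_fun setT a) (mb : measurable_fun setT b)
  (a0 : forall x, (0 <= a x)%R) (b0 : forall x, (0 <= b x)%R)
  (hab : forall A, <<s G >> A ->
     \int[mu]_(x in A) (a x)%:E = \int[mu]_(x in A) (b x)%:E)
  (h : g_sigma_algebraType G -> \bar R)
  (mh : measurable_fun setT h) (h0 : forall x, 0 <= h x) :
  \int[mu]_x (h x * (a x)%:E) = \int[mu]_x (h x * (b x)%:E).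
Proof.
have mT : measurable (setT : set (g_sigma_algebraType G)) := measurableT.
pose hn := nnsfun_approx mT mh.
suff H : forall c : T -> R, measurable_fun setT c -> (forall x, (0 <= c x)%R) ->
  \int[mu]_x (h x * (c x)%:E) = limn (fun n => \int[mu]_x ((hn n x)%:E * (c x)%:E)).
  rewrite (H a) // (H b) //; congr (lim (_ @ \oo)); apply/funext => n.
  rewrite !simple_step //; apply: eq_fsbigr => y _; congr (_ * _).
  apply: hab; exact: (measurable_funPTI (hn n) (measurable_set1 y)).
move=> c mc c0.
have hE x : h x * (c x)%:E = limn (fun n => (hn n x)%:E * (c x)%:E).
  apply/esym/cvg_lim => //; apply: cvgeZr => //; exact: cvg_nnsfun_approx.
under eq_integral do rewrite hE.
apply: monotone_convergence => //.
- move=> n; apply: emeasurable_funM; apply/measurable_EFinP => //.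
  apply: gmeas; exact: measurable_funP.
- by move=> n x _; rewrite mule_ge0 ?lee_fin //; exact: fun_ge0.
- move=> x _ m n mn; rewrite lee_wpmul2r ?lee_fin //.
  by have /lefP := nd_nnsfun_approx mT mh mn; apply.
Qed.

Lemma ce_meas (Z : T -> R) :
  (forall B, measurable B -> <<s G >> (Z @^-1` B)) ->
  measurable_fun (setT : set (g_sigma_algebraType G)) (Z : g_sigma_algebraType G -> R).
Proof. by move=> hZ _ B mB; rewrite setTI; exact: hZ. Qed.

Lemma ce_measT (Z : T -> R) :
  (forall B, measurable B -> <<s G >> (Z @^-1` B)) -> measurable_fun setT Z.
Proof. by move=> hZ; apply: gmeas; exact: ce_meas. Qed.

Lemma pos0A (A : set T) (g : T -> R) : measurable A -> measurable_fun A g ->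
  (forall x, A x -> (0 < g x)%R) -> \int[mu]_(x in A) (g x)%:E = 0 -> mu A = 0.
Proof.
move=> mA mg gpos i0.
have : \int[mu]_(x in A) `|(EFin \o g) x| = 0.
  rewrite -i0; apply: eq_integral => x /set_mem Ax.
  by rewrite gee0_abs // lee_fin ltW // gpos.
move/(ae_eq_integral_abs mu mA (f := EFin \o g)).
have mgE : measurable_fun A (EFin \o g) by exact/measurable_EFinP.
move=> /(_ mgE) [N [mN N0 sub]].
apply/eqP; rewrite eq_le measure_ge0 andbT -N0; apply: le_measure; rewrite ?inE //.
move=> x Ax; apply: sub => /= /(_ Ax) [] /eqP.
by rewrite gt_eqF // gpos.
Qed.

Lemma mneq (Z1 Z2 : T -> R) : measurable_fun setT Z1 -> measurable_fun setT Z2 ->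
  measurable [set x | Z1 x <> Z2 x].
Proof.
move=> m1 m2.
rewrite (_ : [set x | _] = [set: T] `&` [set x | (Z1 x)%:E != (Z2 x)%:E]).
  by apply: measurable_neqe => //; exact/measurable_EFinP.
apply/seteqP; split => x /=.
  by move=> h; split => //; apply/eqP => -[].
by case=> _ /eqP h e; apply: h; rewrite e.
Qed.

Lemma ae_int (A : set T) (Z1 Z2 : T -> R) : measurable A ->
  measurable_fun setT Z1 -> measurable_fun setT Z2 ->
  mu [set x | Z1 x <> Z2 x] = 0 ->
  \int[mu]_(x in A) (Z1 x)%:E = \int[mu]_(x in A) (Z2 x)%:E.
Proof.
move=> mA m1 m2 N0.
apply: ae_eq_integral => //.
- by apply/measurable_EFinP; exact: measurable_funTS.
- by apply/measurable_EFinP; exact: measurable_funTS.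
exists [set x | Z1 x <> Z2 x]; split => //; first exact: mneq.
by move=> x /= nx e; apply: nx => _; rewrite e.
Qed.

Lemma uniq_lt (Z1 Z2 : T -> R)
  (h1 : forall B, measurable B -> <<s G >> (Z1 @^-1` B))
  (h2 : forall B, measurable B -> <<s G >> (Z2 @^-1` B))
  (i1 : mu.-integrable setT (EFin \o Z1)) (i2 : mu.-integrable setT (EFin \o Z2))
  (e : forall A, <<s G >> A ->
     \int[mu]_(x in A) (Z1 x)%:E = \int[mu]_(x in A) (Z2 x)%:E) :
  mu [set x | (Z1 x < Z2 x)%R] = 0.
Proof.
have m1 : measurable_fun (setT : set (g_sigma_algebraType G)) (EFin \o Z1).
  by apply/measurable_EFinP; exact: ce_meas.
have m2 : measurable_fun (setT : set (g_sigma_algebraType G)) (EFin \o Z2).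
  by apply/measurable_EFinP; exact: ce_meas.
have GA : <<s G >> [set x | (Z1 x < Z2 x)%R].
  by have := measurable_lte measurableT m1 m2; rewrite setTI.
have mA : measurable [set x | (Z1 x < Z2 x)%R] by exact: sGM.
apply: (@pos0A _ (fun x => Z2 x - Z1 x)%R mA).
- apply: measurable_funTS; apply: measurable_funB; exact: ce_measT.
- by move=> x /=; rewrite subr_gt0.
under eq_integral do rewrite EFinB.
rewrite integralB_EFin //; first by rewrite e // subee // integrable_fin_num // (integrableS measurableT).
- exact: (integrableS measurableT).
- exact: (integrableS measurableT).
Qed.

Lemma uniq (Z1 Z2 : T -> R)
  (h1 : forall B, measurable B -> <<s G >> (Z1 @^-1` B))
  (h2 : forall B, measurable B -> <<s G >> (Z2 @^-1` B))
  (i1 : mu.-integrable setT (EFin \o Z1)) (i2 : mu.-integrable setT (EFin \o Z2))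
  (e : forall A, <<s G >> A ->
     \int[mu]_(x in A) (Z1 x)%:E = \int[mu]_(x in A) (Z2 x)%:E) :
  mu [set x | Z1 x <> Z2 x] = 0.
Proof.
have a := @uniq_lt Z1 Z2 h1 h2 i1 i2 e.
have b := @uniq_lt Z2 Z1 h2 h1 i2 i1 (fun A hA => esym (e A hA)).
have mlt (U V : T -> R) : measurable_fun setT U -> measurable_fun setT V ->
    measurable [set x | (U x < V x)%R].
  move=> mU mV.
  have mU' : measurable_fun setT (EFin \o U) by exact/measurable_EFinP.
  have mV' : measurable_fun setT (EFin \o V) by exact/measurable_EFinP.
  by have := measurable_lte measurableT mU' mV'; rewrite setTI.
apply/eqP; rewrite eq_le measure_ge0 andbT.
have m1 := @ce_measT Z1 h1; have m2 := @ce_measT Z2 h2.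
apply: (le_trans (y := mu ([set x | (Z1 x < Z2 x)%R] `|` [set x | (Z2 x < Z1 x)%R]))).
  apply: le_measure; rewrite ?inE; [exact: mneq|apply: measurableU; exact: mlt| ].
  by move=> x /= /eqP; rewrite neq_lt => /orP[] h; [left|right].
apply: le_trans (measureU2 _ _ _) _; [exact: mlt|exact: mlt|].
by rewrite [X in X + _](_ : _ = 0) ?[X in _ + X](_ : _ = 0) ?adde0.
Qed.

Lemma nonneg_int (Z V : T -> R) : measurable_fun setT Z -> (forall x, (0 <= Z x)%R) ->
  mu.-integrable setT (EFin \o V) ->
  \int[mu]_x (V x)%:E = \int[mu]_x (Z x)%:E -> mu.-integrable setT (EFin \o Z).
Proof.
move=> mZ Z0 iV e; apply/integrableP; split; first exact/measurable_EFinP.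
rewrite (eq_integral (fun x => (Z x)%:E)); last by move=> x _ /=; rewrite ger0_norm.
rewrite -e; exact: integrable_lty.
Qed.

Lemma int_lin2 (u v : T -> R) (c : R) : measurable_fun setT u -> measurable_fun setT v ->
  (forall x, (0 <= u x)%R) -> (forall x, (0 <= v x)%R) -> (0 <= c)%R ->
  \int[mu]_x (u x + c * v x)%:E = \int[mu]_x (u x)%:E + c%:E * \int[mu]_x (v x)%:E.
Proof.
move=> mu' mv u0 v0 c0.
under eq_integral do rewrite EFinD EFinM.
rewrite ge0_integralD //; last 4 first.
- by move=> x _; rewrite lee_fin.
- exact/measurable_EFinP.
- by move=> x _; rewrite mule_ge0 ?lee_fin.
- by apply: emeasurable_funM => //; exact/measurable_EFinP.
by rewrite ge0_integralZl_EFin //; [move=> x _; rewrite lee_fin | exact/measurable_EFinP].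
Qed.

Lemma null_trans (Z1 Z2 Z3 : T -> R) : measurable_fun setT Z1 ->
  measurable_fun setT Z2 -> measurable_fun setT Z3 ->
  mu [set x | Z1 x <> Z2 x] = 0 -> mu [set x | Z2 x <> Z3 x] = 0 ->
  mu [set x | Z1 x <> Z3 x] = 0.
Proof.
move=> m1 m2 m3 a b.
apply/eqP; rewrite eq_le measure_ge0 andbT.
apply: (le_trans (y := mu ([set x | Z1 x <> Z2 x] `|` [set x | Z2 x <> Z3 x]))).
  apply: le_measure; rewrite ?inE; [exact: mneq|apply: measurableU; exact: mneq| ].
  move=> x /= h13; have [h12|h12] := eqVneq (Z1 x) (Z2 x); last by left; apply/eqP.
  by right; rewrite -h12.
apply: le_trans (measureU2 _ _ _) _; [exact: mneq|exact: mneq|].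
by rewrite [X in X + _](_ : _ = 0) ?[X in _ + X](_ : _ = 0) ?adde0.
Qed.

Lemma int_add (u v : T -> R) : measurable_fun setT u -> measurable_fun setT v ->
  (forall x, (0 <= u x)%R) -> (forall x, (0 <= v x)%R) ->
  \int[mu]_x (u x + v x)%:E = \int[mu]_x (u x)%:E + \int[mu]_x (v x)%:E.
Proof.
move=> mu' mv u0 v0.
rewrite (eq_integral (fun x => (u x + 1 * v x)%:E)); last by move=> x _; rewrite mul1r.
by rewrite int_lin2 // mul1e.
Qed.
End sub.


Section reals.
Variable R : realDomainType.
Implicit Types x e D : R.

Lemma maxpn x : x = Num.max x 0 - Num.max (- x) 0.
Proof.
rewrite /Num.max; case: ltP => h1; case: ltP => h2; lra.
Qed.

Lemma ident e D :
  (e + D) ^+ 2 + 2 * (Num.max (- e) 0 * Num.max D 0) + 2 * (Num.max e 0 * Num.max (- D) 0)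
  = e ^+ 2 + D ^+ 2 + 2 * (Num.max e 0 * Num.max D 0) + 2 * (Num.max (- e) 0 * Num.max (- D) 0).
Proof.
have He := maxpn e; have HD := maxpn D.
move: He HD.
move: (Num.max e 0) (Num.max (- e) 0) (Num.max D 0) (Num.max (- D) 0) => p n q r.
move=> -> ->.
ring.
Qed.
Lemma bnd1 e D : Num.max e 0 * Num.max D 0 <= 3 * e ^+ 2 + 2 * (e + D) ^+ 2.
Proof. rewrite /Num.max; case: ltP => h1; case: ltP => h2; nra. Qed.
Lemma bnd2 e D : Num.max (- e) 0 * Num.max (- D) 0 <= 3 * e ^+ 2 + 2 * (e + D) ^+ 2.
Proof. rewrite /Num.max; case: ltP => h1; case: ltP => h2; nra. Qed.
Lemma bnd3 x : `|x| <= `|1 + x ^+ 2|.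
Proof.
rewrite (ger0_norm (x := 1 + x ^+ 2)); last nra.
rewrite ler_norml; apply/andP; split; nra.
Qed.
End reals.

Local Open Scope ring_scope.
Theorem proposition1 (R : realType) (d : measure_display)
  (T : measurableType d) (P : probability T R)
  (Y1 Y2 : nat -> T -> R)
  (mY1 : forall s, measurable_fun setT (Y1 s))
  (mY2 : forall s, measurable_fun setT (Y2 s))
  (sqint : forall s, P.-integrable setT (fun x => ((Y2 s x) ^+ 2)%:E))
  (t : nat)
  (m2 m12 v2 v12 s2 : T -> R)
  (hm2 : is_cond_exp P (past_sigma Y2 t) (Y2 t) m2)
  (hm12 : is_cond_exp P (past_sigma2 Y1 Y2 t) (Y2 t) m12)
  (hv2 : is_cond_exp P (past_sigma Y2 t)
           (fun x => (Y2 t x - m12 x) ^+ 2) v2)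
  (hv12 : is_cond_exp P (past_sigma2 Y1 Y2 t)
           (fun x => (Y2 t x - m12 x) ^+ 2) v12)
  (hs2 : is_cond_exp P (past_sigma Y2 t)
           (fun x => (Y2 t x - m2 x) ^+ 2) s2) :
  ((0 < P [set x | m2 x <> m12 x])%E \/
   (0 < P [set x | v2 x <> v12 x])%E) ->
  (0 < P [set x | s2 x <> v12 x])%E.
Proof.
move=> H.
rewrite lt0e measure_ge0 andbT; apply/eqP => hS.
pose G2 := past_gen Y2 t.
pose G12 := past_sigma Y1 t `|` past_sigma Y2 t.
have GM1 : past_gen Y1 t `<=` measurable.
  by move=> A [s [_ [B [mB ->]]]]; rewrite -(setTI (_ @^-1` _)); exact: mY1.
have GM2 : G2 `<=` measurable.
  by move=> A [s [_ [B [mB ->]]]]; rewrite -(setTI (_ @^-1` _)); exact: mY2.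
have GM12 : G12 `<=` measurable.
  by move=> A [] hA; [exact: (@sGM _ _ _ GM1)|exact: (@sGM _ _ _ GM2)].
have s212 : past_sigma Y2 t `<=` past_sigma2 Y1 Y2 t.
  by move=> A hA; apply: sub_sigma_algebra; right.
case: hm2 => mm2 [im2 em2].
case: hm12 => mm12 [im12 em12].
case: hv2 => mv2 [iv2 ev2].
case: hv12 => mv12 [iv12 ev12].
case: hs2 => ms2 [is2 es2].
have mm2' : forall B, measurable B -> <<s G12 >> (m2 @^-1` B).
  by move=> B mB; apply: s212; exact: mm2.
have mm2T := @ce_measT _ _ _ G2 GM2 m2 mm2.
have mm12T := @ce_measT _ _ _ G12 GM12 m12 mm12.
have mv2T := @ce_measT _ _ _ G2 GM2 v2 mv2.
have mv12T := @ce_measT _ _ _ G12 GM12 v12 mv12.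
have ms2T := @ce_measT _ _ _ G2 GM2 s2 ms2.
have mYT : measurable_fun setT (Y2 t) := mY2 t.
have mT : measurable (setT : set T) := measurableT.
have T12 : past_sigma2 Y1 Y2 t setT := @measurableT _ (g_sigma_algebraType G12).
have T2 : past_sigma Y2 t setT := @measurableT _ (g_sigma_algebraType G2).
pose e x := Y2 t x - m12 x.
pose f x := Y2 t x - m2 x.
pose D x := m12 x - m2 x.
have fE x : f x = e x + D x by rewrite /f /e /D; ring.
have me : measurable_fun setT e by apply: measurable_funB.
have mf : measurable_fun setT f by apply: measurable_funB.
have mD : measurable_fun setT D by apply: measurable_funB.
have me2 : measurable_fun setT (fun x => e x ^+ 2) by apply: measurable_funX.
have mf2 : measurable_fun setT (fun x => f x ^+ 2) by apply: measurable_funX.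
have mD2 : measurable_fun setT (fun x => D x ^+ 2) by apply: measurable_funX.
have ie2 : P.-integrable setT (EFin \o (fun x => e x ^+ 2)).
  apply: (@nonneg_int _ _ _ P _ v12 me2) => //; first by move=> x; exact: sqr_ge0.
  exact: ev12.
have if2 : P.-integrable setT (EFin \o (fun x => f x ^+ 2)).
  apply: (@nonneg_int _ _ _ P _ s2 mf2) => //; first by move=> x; exact: sqr_ge0.
  exact: es2.
have hA : forall A, past_sigma Y2 t A ->
    (\int[P]_(x in A) (v2 x)%:E = \int[P]_(x in A) (s2 x)%:E)%E.
  move=> A hA; have mA : measurable A := @sGM _ _ G2 GM2 A hA.
  rewrite ev2 // -ev12; last exact: s212.
  by apply/esym; apply: ae_int.
have hv : P [set x | v2 x <> v12 x] = 0%E.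
  apply: (@null_trans _ _ _ P v2 s2 v12) => //.
  exact: (@uniq _ _ _ P G2 GM2 v2 s2 mv2 ms2 iv2 is2 hA).

have iY : P.-integrable setT (EFin \o Y2 t).
  apply: (@le_integrable _ _ _ P setT mT _ (fun x => (1 + Y2 t x ^+ 2)%:E)).
  - exact/measurable_EFinP.
  - by move=> x _ /=; rewrite lee_fin bnd3.
  - rewrite (_ : (fun x => _) = (fun x => (1%:E + (Y2 t x ^+ 2)%:E)%E)); last first.
      by apply/funext => x; rewrite /= EFinD.
    apply: (@integrableD _ _ _ P setT mT (EFin \o cst 1)) => //.
    exact: finite_measure_integrable_cst.
have ie : P.-integrable setT (EFin \o e).
  rewrite (_ : EFin \o e = (EFin \o Y2 t) \- (EFin \o m12))%E; last first.
    by apply/funext => x; rewrite /= EFinB.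
  exact: integrableB.
have hab : forall A, <<s G12 >> A ->
    (\int[P]_(x in A) (e^\+ x)%:E = \int[P]_(x in A) (e^\- x)%:E)%E.
  move=> A hA12; have mA : measurable A := @sGM _ _ G12 GM12 A hA12.
  have iA g : P.-integrable setT g -> P.-integrable A g.
    by move=> ig; exact: (integrableS mT mA (@subsetT _ A) ig).
  have e0 : (\int[P]_(x in A) (EFin \o e) x = 0)%E.
    rewrite (eq_integral (fun x => (Y2 t x)%:E - (m12 x)%:E))%E; last first.
      by move=> x _; rewrite /= EFinB.
    rewrite integralB_EFin //; [|exact: iA|exact: iA].
    by rewrite em12 // subee // integrable_fin_num // iA.
  have fp : (\int[P]_(x in A) (e^\- x)%:E)%E \is a fin_num.
    apply: integrable_fin_num => //.
    rewrite (_ : (fun x => _) = (EFin \o e)^\-)%E; last by rewrite funerneg.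
    by apply: integrable_funeneg => //; exact: iA.
  move: e0; rewrite integralE funerpos funerneg => e0.
  by rewrite -[LHS](subeK _ fp) e0 add0e.

have mDG : measurable_fun (setT : set (g_sigma_algebraType G12)) (D : g_sigma_algebraType G12 -> R).
  by apply: measurable_funB; exact: ce_meas.
have mhp : measurable_fun (setT : set (g_sigma_algebraType G12))
    (EFin \o D^\+ : g_sigma_algebraType G12 -> \bar R).
  by apply/measurable_EFinP; exact: measurable_funrpos.
have mhn : measurable_fun (setT : set (g_sigma_algebraType G12))
    (EFin \o D^\- : g_sigma_algebraType G12 -> \bar R).
  by apply/measurable_EFinP; exact: measurable_funrneg.
have K1 := @key _ _ _ P G12 GM12 e^\+ e^\- (measurable_funrpos me) (measurable_funrneg me)
  (funrpos_ge0 e) (funrneg_ge0 e) hab _ mhp (fun x => funrpos_ge0 D x).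
have K2 := @key _ _ _ P G12 GM12 e^\+ e^\- (measurable_funrpos me) (measurable_funrneg me)
  (funrpos_ge0 e) (funrneg_ge0 e) hab _ mhn (fun x => funrneg_ge0 D x).
pose PP x := e^\+ x * D^\+ x.
pose NP x := e^\- x * D^\+ x.
pose PN x := e^\+ x * D^\- x.
pose NN x := e^\- x * D^\- x.
have K1' : (\int[P]_x (PP x)%:E = \int[P]_x (NP x)%:E)%E.
  rewrite (eq_integral (fun x => ((EFin \o funrpos D) x * (funrpos e x)%:E)%E)); last first.
    by move=> x _; rewrite /= -EFinM mulrC.
  by rewrite K1; apply: eq_integral => x _; rewrite /= -EFinM mulrC.
have K2' : (\int[P]_x (PN x)%:E = \int[P]_x (NN x)%:E)%E.
  rewrite (eq_integral (fun x => ((EFin \o funrneg D) x * (funrpos e x)%:E)%E)); last first.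
    by move=> x _; rewrite /= -EFinM mulrC.
  by rewrite K2; apply: eq_integral => x _; rewrite /= -EFinM mulrC.

have mPP : measurable_fun setT PP.
  by apply: measurable_funM; [exact: measurable_funrpos|exact: measurable_funrpos].
have mNP : measurable_fun setT NP.
  by apply: measurable_funM; [exact: measurable_funrneg|exact: measurable_funrpos].
have mPN : measurable_fun setT PN.
  by apply: measurable_funM; [exact: measurable_funrpos|exact: measurable_funrneg].
have mNN : measurable_fun setT NN.
  by apply: measurable_funM; [exact: measurable_funrneg|exact: measurable_funrneg].
have PP0 x : 0 <= PP x by apply: mulr_ge0; [exact: funrpos_ge0|exact: funrpos_ge0].
have NP0 x : 0 <= NP x by apply: mulr_ge0; [exact: funrneg_ge0|exact: funrpos_ge0].
have PN0 x : 0 <= PN x by apply: mulr_ge0; [exact: funrpos_ge0|exact: funrneg_ge0].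
have NN0 x : 0 <= NN x by apply: mulr_ge0; [exact: funrneg_ge0|exact: funrneg_ge0].
have sq0 (g : T -> R) x : 0 <= g x ^+ 2 by exact: sqr_ge0.
have Iid : (\int[P]_x ((f x ^+ 2 + 2 * NP x) + 2 * PN x)%:E =
            \int[P]_x (((e x ^+ 2 + D x ^+ 2) + 2 * PP x) + 2 * NN x)%:E)%E.
  by apply: eq_integral => x _; congr EFin; rewrite fE; exact: ident.
have two0 : (0 <= 2 :> R) by [].
have mf2NP : measurable_fun setT (fun x => f x ^+ 2 + 2 * NP x).
  by apply: measurable_funD => //; apply: measurable_funM.
have f2NP0 x : 0 <= f x ^+ 2 + 2 * NP x by apply: addr_ge0 => //; apply: mulr_ge0.
have meD : measurable_fun setT (fun x => e x ^+ 2 + D x ^+ 2) by exact: measurable_funD.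
have eD0 x : 0 <= e x ^+ 2 + D x ^+ 2 by apply: addr_ge0.
have meDPP : measurable_fun setT (fun x => (e x ^+ 2 + D x ^+ 2) + 2 * PP x).
  by apply: measurable_funD => //; apply: measurable_funM.
have eDPP0 x : 0 <= (e x ^+ 2 + D x ^+ 2) + 2 * PP x by apply: addr_ge0 => //; apply: mulr_ge0.
rewrite (@int_lin2 _ _ _ P (fun x => f x ^+ 2 + 2 * NP x) PN 2 mf2NP mPN f2NP0 PN0 two0) in Iid.
rewrite (@int_lin2 _ _ _ P (fun x => f x ^+ 2) NP 2 mf2 mNP (sq0 f) NP0 two0) in Iid.
rewrite (@int_lin2 _ _ _ P (fun x => (e x ^+ 2 + D x ^+ 2) + 2 * PP x) NN 2 meDPP mNN eDPP0 NN0 two0) in Iid.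
rewrite (@int_lin2 _ _ _ P (fun x => e x ^+ 2 + D x ^+ 2) PP 2 meD mPP eD0 PP0 two0) in Iid.
rewrite (@int_add _ _ _ P (fun x => e x ^+ 2) (fun x => D x ^+ 2) me2 mD2 (sq0 e) (sq0 D)) in Iid.
have IS : (\int[P]_x (f x ^+ 2)%:E = \int[P]_x (e x ^+ 2)%:E)%E.
  rewrite -es2 // -ev12 //; exact: ae_int.
rewrite IS -K1' K2' in Iid.
have ibnd : P.-integrable setT (fun x => (3 * e x ^+ 2 + 2 * f x ^+ 2)%:E).
  rewrite (_ : (fun x => _) = (fun x => (3%:E * (e x ^+ 2)%:E) + (2%:E * (f x ^+ 2)%:E))%E); last first.
    by apply/funext => x; rewrite EFinD !EFinM.
  apply: integrableD => //; exact: integrableZl.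
have bnd0 x : 0 <= 3 * e x ^+ 2 + 2 * f x ^+ 2 by apply: addr_ge0; apply: mulr_ge0.
have fPP : (\int[P]_x (PP x)%:E)%E \is a fin_num.
  apply: integrable_fin_num => //.
  apply: (@le_integrable _ _ _ P setT mT _ _ _ _ ibnd).
    exact/measurable_EFinP.
  move=> x _ /=; rewrite lee_fin !ger0_norm // fE; exact: bnd1.
have fNN : (\int[P]_x (NN x)%:E)%E \is a fin_num.
  apply: integrable_fin_num => //.
  apply: (@le_integrable _ _ _ P setT mT _ _ _ _ ibnd).
    exact/measurable_EFinP.
  move=> x _ /=; rewrite lee_fin !ger0_norm // fE; exact: bnd2.
have fe2 : (\int[P]_x (e x ^+ 2)%:E)%E \is a fin_num by exact: integrable_fin_num.
set a := (\int[P]_x (e x ^+ 2)%:E)%E in Iid fe2.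
set X := (\int[P]_x (D x ^+ 2)%:E)%E in Iid.
set p := (\int[P]_x (PP x)%:E)%E in Iid fPP.
set q := (\int[P]_x (NN x)%:E)%E in Iid fNN.
have fc : (a + 2 * p + 2 * q)%E \is a fin_num.
  by rewrite fin_numD fin_numD fin_numM // fe2 fin_numM.
have X0 : X = 0%E.
  move: Iid; rewrite (addeAC a X) (addeAC (a + 2 * p)%E X) => Iid.
  by rewrite -[LHS](addeK _ fc) (addeC X) -Iid subee.
have hm : P [set x | m2 x <> m12 x] = 0%E.
  have mA : measurable [set x | m2 x <> m12 x] by exact: mneq.
  apply: (@pos0A _ _ _ P _ (fun x => D x ^+ 2) mA).
  - exact: measurable_funTS.
  - move=> x /= hx; rewrite lt0r sqr_ge0 andbT sqrf_eq0 subr_eq0.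
    by apply/eqP => h; apply: hx; rewrite h.
  - apply/eqP; rewrite eq_le integral_ge0 ?andbT; last by move=> x _; rewrite lee_fin.
    rewrite -X0; apply: ge0_subset_integral => //.
    + exact/measurable_EFinP.
    + by move=> x _; rewrite lee_fin.
case: H => h.
  by move: h; rewrite [X in (0 < X)%E](_ : _ = 0%E) // ltxx.
by move: h; rewrite [X in (0 < X)%E](_ : _ = 0%E) // ltxx.
Qed.
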